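(* Let $p$ be a prime and let $(\alpha,\delta)\in\mathbb{O}_p\times(\mathbb{Q}_{\ge0}\cup\{\infty\})$ be an admissible pair. Then $$\mathbb{Z}_{(p)}[X]\cap M_{(p),\alpha,\delta}=\begin{cases}p\,\mathbb{Z}_{(p)}[X], & \delta=0,\\ (p,g_\alpha(X)), & \delta>0,\end{cases}$$ where $g_\alpha\in\mathbb{Z}_{(p)}[X]$ is a monic polynomial whose reduction modulo $p$ is the minimal polynomial over $\mathbb{F}_p$ of the residue $\overline{\alpha}$ of $\alpha$ modulo $\mathbb{M}_p$.
   Context: Fix a prime $p$. $\overline{\mathbb{Q}_p}$ is an algebraic closure of $\mathbb{Q}_p$, $v_p$ the unique extension of the $p$-adic valuation, $\mathbb{C}_p$ the completion of $\overline{\mathbb{Q}_p}$, $\mathbb{O}_p=\{x\in\mathbb{C}_p:v_p(x)\ge0\}$ with maximal ideal $\mathbb{M}_p$ (its residue field is an algebraic closure of $\mathbb{F}_p=\mathbb{Z}/p\mathbb{Z}$). A pair $(\alpha,\delta)\in\mathbb{C}_p\times(\mathbb{Q}\cup\{\infty\})$ is admissible if: when $\delta\in\mathbb{Q}$, $\alpha\in\overline{\mathbb{Q}_p}$; when $\delta=\infty$, $\alpha$ is transcendental over $\mathbb{Q}$. For $\delta\in\mathbb{Q}$, $v_{p,\alpha,\delta}$ is the monomial valuation on $\mathbb{C}_p(X)$ given on polynomials by $v_{p,\alpha,\delta}(\sum_i a_i(X-\alpha)^i)=\min_i\{v_p(a_i)+i\delta\}$; for $\delta=\infty$, $v_{p,\alpha,\infty}(\varphi)=v_p(\varphi(\alpha))$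 for $\varphi\in\mathbb{Q}(X)$. $\mathbb{Z}_{(p),\alpha,\delta}=\{\varphi\in\mathbb{Q}(X):v_{p,\alpha,\delta}(\varphi)\ge0\}$ and $M_{(p),\alpha,\delta}=\{\varphi\in\mathbb{Q}(X):v_{p,\alpha,\delta}(\varphi)>0\}$ is its maximal ideal. *)

(* Defs.v *)
From HB Require Import structures.
From mathcomp Require Import all_boot all_order all_algebra.
Set Implicit Arguments. Unset Strict Implicit. Unset Printing Implicit Defensive.
Import Order.TTheory GRing.Theory Num.Theory.
Local Open Scope ring_scope.

Section Defs.
Variables (p : nat) (K : closedFieldType) (v : K -> option rat).

(* values in Q ∪ {∞}, None = ∞ *)
Definition vge (x : K) (N : rat) : bool :=
  match v x with None => true | Some r => N <= r end.
Definition opos (o : option rat) : bool :=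
  match o with None => true | Some r => 0 < r end.
Definition omin (a b : option rat) : option rat :=
  match a, b with
  | None, x => x | x, None => x | Some a, Some b => Some (Num.min a b) end.

Definition vpQ (q : rat) : rat :=
  (logn p `|numq q|)%:R - (logn p `|denq q|)%:R.

(* the elements of the closure of Q in K (a copy of Q_p) *)
Definition in_Qp (x : K) : Prop :=
  forall N : rat, exists q : rat, vge (x - ratr q) N.

Definition alg_Qp (x : K) : Prop :=
  exists P : {poly K}, P != 0 /\ (forall i, in_Qp P`_i) /\ root P x.

(* (K, v) is a model of (C_p, v_p): an algebraically closed, complete,
   non-archimedean valued field, valuation extending v_p on Q, in which the
   elements algebraic over the closure of Q are dense. *)
Record Cp_model : Prop := {
  v_zero : forall x, v x = None <-> x = 0;
  v_mul : forall x y r s, v x = Some r -> v y = Some s -> v (x * y) = Some (r + s);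
  v_ultra : forall x y N, vge x N -> vge y N -> vge (x + y) N;
  v_rat : forall q : rat, q != 0 -> v (ratr q) = Some (vpQ q);
  v_complete : forall u : nat -> K,
    (forall N : rat, exists n0, forall m n, (n0 <= m)%N -> (n0 <= n)%N ->
       vge (u m - u n) N) ->
    exists l, forall N : rat, exists n0, forall n, (n0 <= n)%N -> vge (u n - l) N;
  v_dense : forall x (N : rat), exists y, alg_Qp y /\ vge (x - y) N
}.

(* admissible pairs (delta = None means delta = ∞) *)
Definition admissible (alpha : K) (delta : option rat) : Prop :=
  match delta with
  | Some _ => alg_Qp alpha
  | None => forall f : {poly rat}, (map_poly ratr f).[alpha] = 0 -> f = 0
  end.

Definition monoval (alpha : K) (delta : option rat) (f : {poly rat}) : option rat :=
  match delta with
  | Some d =>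
      let F := (map_poly ratr f : {poly K}) \Po ('X + alpha%:P) in
      foldr (fun i acc =>
               omin (match v F`_i with None => None
                     | Some r => Some (r + i%:R * d) end) acc)
            None (iota 0 (size F))
  | None => v (map_poly ratr f : {poly K}).[alpha]
  end.

Definition Zp_loc (q : rat) : bool := ~~ (p %| `|denq q|)%N.
Definition polyZp (f : {poly rat}) : bool := all Zp_loc f.

Definition redp (q : rat) : 'F_p := (numq q)%:~R / (denq q)%:~R.

(* h(alpha-bar) = 0 in the residue field *)
Definition root_res (alpha : K) (h : {poly 'F_p}) : bool :=
  opos (v (map_poly (fun c : 'F_p => ((nat_of_ord c)%:R : K)) h).[alpha]).

Definition minpoly_res (alpha : K) (h : {poly 'F_p}) : Prop :=
  h \is monic /\ root_res alpha h /\
  forall h' : {poly 'F_p}, h' != 0 -> root_res alpha h' -> (size h <= size h')%N.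

Definition g_spec (alpha : K) (g : {poly rat}) : Prop :=
  polyZp g /\ g \is monic /\ minpoly_res alpha (map_poly redp g).

Definition p_ideal (f : {poly rat}) : Prop :=
  exists h, polyZp h /\ f = (p%:R : rat) *: h.
Definition pg_ideal (g f : {poly rat}) : Prop :=
  exists h1 h2, polyZp h1 /\ polyZp h2 /\ f = (p%:R : rat) *: h1 + g * h2.

End Defs.

(* Main.v *)
Require Import Defs.
From HB Require Import structures.
From mathcomp Require Import all_boot all_order all_algebra.
From Stdlib Require Import Classical.
From mathcomp Require Import ring lra.
Set Implicit Arguments. Unset Strict Implicit.
Import Order.TTheory GRing.Theory Num.Theory.
Local Open Scope ring_scope.

Section Pf.
Variables (p : nat) (K : closedFieldType) (v : K -> option rat).
Hypothesis pP : prime p.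
Hypothesis CM : Cp_model p v.

Lemma v0 : v 0 = None.
Proof. by apply/(v_zero CM). Qed.

Lemma vNone x : v x = None -> x = 0.
Proof. by move/(v_zero CM). Qed.

Lemma vSome x : x != 0 -> exists r, v x = Some r.
Proof.
move=> nz; case E: (v x) => [r|]; first by exists r.
by move/vNone: E => E; rewrite E eqxx in nz.
Qed.

Lemma intr_neq0K (z : int) : z != 0 -> z%:~R != 0 :> K.
Proof.
move=> nz; have H : z%:~R != 0 :> rat by rewrite intr_eq0.
have := @v_rat _ _ _ CM _ H.
rewrite ratr_int => E; apply/eqP => E0; by rewrite E0 v0 in E.
Qed.

Let nz_den (x : rat) : (denq x)%:~R != 0 :> K.
Proof. by apply: intr_neq0K; rewrite denq_eq0. Qed.

Fact ratrK_zmod : zmod_morphism (@ratr K).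
Proof.
have injZtoQ: @injective rat int intr by apply: intr_inj.
move=> x y.
apply: (canLR (mulfK (nz_den _))); apply: (mulIf (nz_den x)).
rewrite mulrAC mulrBl divfK ?nz_den // mulrAC -!rmorphM.
apply: (mulIf (nz_den y)); rewrite mulrAC mulrBl divfK ?nz_den //.
rewrite -!(rmorphM, rmorphB); congr _%:~R; apply: injZtoQ.
rewrite !(rmorphM, rmorphB) /= [_ - _]lock /= -lock !numqE.
by rewrite (mulrAC y) -!mulrBl -mulrA mulrAC !mulrA.
Qed.

Fact ratrK_monoid : monoid_morphism (@ratr K).
Proof.
have injZtoQ: @injective rat int intr by apply: intr_inj.
split=> [|x y]; first by rewrite /ratr divr1.
rewrite /ratr mulrC mulrAC; apply: canLR (mulKf (nz_den _)) _; rewrite !mulrA.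
do 2!apply: canRL (mulfK (nz_den _)) _; rewrite -!rmorphM; congr _%:~R.
apply: injZtoQ; rewrite !rmorphM [x * y]lock /= !numqE -lock.
by rewrite -!mulrA mulrA mulrCA -!mulrA (mulrCA y).
Qed.

Definition rK (x : rat) : K := ratr x.
HB.instance Definition _ := GRing.isZmodMorphism.Build rat K rK
  ratrK_zmod.
HB.instance Definition _ := GRing.isMonoidMorphism.Build rat K rK
  ratrK_monoid.


Lemma r1 : ratr 1 = 1 :> K. Proof. exact: (rmorph1 rK). Qed.

Lemma v1 : v 1 = Some 0.
Proof. by have := @v_rat _ _ _ CM 1 isT; rewrite r1 => ->; rewrite /vpQ subrr. Qed.

Lemma vN1 : v (-1) = Some 0.
Proof.
have nz1 : (-1 : K) != 0 by rewrite oppr_eq0 oner_eq0.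
have [r Hr] := vSome nz1.
have := v_mul CM Hr Hr; rewrite mulrNN mulr1 v1 => -[] h.
by rewrite Hr; congr Some; lra.
Qed.

Lemma vN x : v (- x) = v x.
Proof.
have [->|nz] := eqVneq x 0; first by rewrite oppr0.
have [r Hr] := vSome nz.
by rewrite -mulN1r (v_mul CM vN1 Hr) add0r.
Qed.

Lemma vgeP x N : vge v x N <-> (x = 0 \/ exists r, v x = Some r /\ N <= r).
Proof.
rewrite /vge; case E: (v x) => [r|]; split.
- by move=> h; right; exists r.
- case=> [x0|[r' [[<-]]]] //; by rewrite x0 v0 in E.
- by move=> _; left; apply: vNone.
- by [].
Qed.

Lemma vge_le x N N' : vge v x N -> N' <= N -> vge v x N'.
Proof. rewrite /vge; case: (v x) => // r h1 h2; exact: le_trans h2 h1. Qed.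

Lemma vge0 N : vge v 0 N.
Proof. by rewrite /vge v0. Qed.

Lemma vgeN x N : vge v (- x) N = vge v x N.
Proof. by rewrite /vge vN. Qed.

Lemma vgeD x y N : vge v x N -> vge v y N -> vge v (x + y) N.
Proof. exact: (v_ultra CM). Qed.

Lemma vgeB x y N : vge v x N -> vge v y N -> vge v (x - y) N.
Proof. by move=> h1 h2; apply: vgeD => //; rewrite vgeN. Qed.

Lemma vgeM x y N N' : vge v x N -> vge v y N' -> vge v (x * y) (N + N').
Proof.
move=> /vgeP [->|[r [Er hr]]]; first by rewrite mul0r vge0.
move=> /vgeP [->|[s [Es hs]]]; first by rewrite mulr0 vge0.
by rewrite /vge (v_mul CM Er Es) lerD.
Qed.

Lemma vSome_ge x r : v x = Some r -> vge v x r.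
Proof. by rewrite /vge => ->. Qed.

Lemma vinv x r : v x = Some r -> v (x^-1) = Some (- r).
Proof.
move=> Er; have nz : x != 0 by apply/eqP => x0; rewrite x0 v0 in Er.
have nzi : x^-1 != 0 by rewrite invr_eq0.
have [s Es] := vSome nzi.
have := v_mul CM Er Es; rewrite mulfV // v1 => -[h].
by rewrite Es; congr Some; lra.
Qed.

Definition Iv (x : K) := vge v x 0.
Definition Mv (x : K) := opos (v x).

Lemma MvP x : Mv x <-> exists N, 0 < N /\ vge v x N.
Proof.
rewrite /Mv /vge; case: (v x) => [r|]; split => //.
- by move=> h; exists r.
- by case=> N [h1 h2]; exact: lt_le_trans h1 h2.
- by move=> _; exists 1.
Qed.

Lemma Mv0 : Mv 0. Proof. by rewrite /Mv v0. Qed.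
Lemma Iv0 : Iv 0. Proof. exact: vge0. Qed.
Lemma Iv1 : Iv 1. Proof. by rewrite /Iv /vge v1. Qed.
Lemma MvI x : Mv x -> Iv x.
Proof. by case/MvP=> N [h1 h2]; apply: vge_le h2 _; exact: ltW. Qed.
Lemma IvD x y : Iv x -> Iv y -> Iv (x + y). Proof. exact: vgeD. Qed.
Lemma IvN x : Iv (- x) = Iv x. Proof. exact: vgeN. Qed.
Lemma IvB x y : Iv x -> Iv y -> Iv (x - y). Proof. exact: vgeB. Qed.
Lemma IvM x y : Iv x -> Iv y -> Iv (x * y).
Proof. by move=> h1 h2; have := vgeM h1 h2; rewrite addr0. Qed.
Lemma MvN x : Mv (- x) = Mv x. Proof. by rewrite /Mv vN. Qed.
Lemma MvD x y : Mv x -> Mv y -> Mv (x + y).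
Proof.
case/MvP=> N [h1 h2] /MvP [N' [h1' h2']]; apply/MvP; exists (Num.min N N').
split; first by rewrite lt_min h1 h1'.
by apply: vgeD; apply: vge_le; eauto; rewrite ge_min lexx ?orbT.
Qed.
Lemma MvB x y : Mv x -> Mv y -> Mv (x - y).
Proof. by move=> h1 h2; apply: MvD => //; rewrite MvN. Qed.
Lemma MvMl x y : Mv x -> Iv y -> Mv (x * y).
Proof.
case/MvP=> N [h1 h2] h3; apply/MvP; exists N; split=> //.
by have := vgeM h2 h3; rewrite addr0.
Qed.
Lemma MvMr x y : Iv x -> Mv y -> Mv (x * y).
Proof. by move=> h1 h2; rewrite mulrC; apply: MvMl. Qed.

Lemma IvX x n : Iv x -> Iv (x ^+ n).
Proof. by move=> h; elim: n => [|n IH]; rewrite ?expr0 ?Iv1 // exprS IvM. Qed.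

Lemma Iv_sum (I : Type) (r : seq I) (P : pred I) (F : I -> K) :
  (forall i, P i -> Iv (F i)) -> Iv (\sum_(i <- r | P i) F i).
Proof. by move=> h; apply: (@big_ind K Iv) => //; [exact: Iv0 | exact: IvD]. Qed.

Lemma Mv_sum (I : Type) (r : seq I) (P : pred I) (F : I -> K) :
  (forall i, P i -> Mv (F i)) -> Mv (\sum_(i <- r | P i) F i).
Proof. by move=> h; apply: (@big_ind K Mv) => //; [exact: Mv0 | exact: MvD]. Qed.


Lemma r0 : ratr 0 = 0 :> K. Proof. exact: (rmorph0 rK). Qed.

Lemma logn_ndvd n : ~~ (p %| n)%N -> logn p n = 0%N.
Proof. by move=> h; rewrite lognE (negbTE h) !andbF. Qed.

Lemma logn_dvd n : (0 < n)%N -> (p %| n)%N -> (0 < logn p n)%N.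
Proof. by move=> n0 h; rewrite logn_gt0 mem_primes pP n0 h. Qed.

Lemma vnat n : (0 < n)%N -> v n%:R = Some (logn p n)%:R.
Proof.
move=> n0; have H : (n%:R : rat) != 0 by rewrite pnatr_eq0 -lt0n.
have := v_rat CM H; rewrite ratr_nat => ->; congr Some.
rewrite /vpQ; have -> : (n%:R : rat) = (n%:Z)%:~R by [].
by rewrite numq_int denq_int /= logn1 subr0.
Qed.

Lemma Ivnat n : Iv n%:R.
Proof.
case: n => [|n]; first exact: Iv0.
by rewrite /Iv /vge vnat // ler0n.
Qed.

Lemma Mvnat n : Mv n%:R <-> (p %| n)%N.
Proof.
case: n => [|n]; first by split=> // _; exact: Mv0.
rewrite /Mv vnat //= ltr0n; split; last exact: logn_dvd.
by move=> h; apply: contraTT h => /logn_ndvd ->.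
Qed.

Lemma vp : v p%:R = Some 1.
Proof. by rewrite vnat ?prime_gt0 // logn_prime // eqxx. Qed.

Lemma Mvp : Mv p%:R. Proof. by apply/Mvnat. Qed.

Lemma intrK (z : int) : z%:~R = (if z is Negz n then - (n.+1)%:R else `|z|%:R) :> K.
Proof. by case: z => n //; rewrite NegzE mulrNz. Qed.

Lemma Ivint (z : int) : Iv z%:~R.
Proof. by rewrite intrK; case: z => n; rewrite ?IvN Ivnat. Qed.

Lemma Mvint (z : int) : Mv z%:~R <-> (p %| `|z|)%N.
Proof. by rewrite intrK; case: z => n; rewrite ?MvN Mvnat. Qed.

Lemma vint_unit (z : int) : ~~ (p %| `|z|)%N -> v z%:~R = Some 0.
Proof.
move=> h; have n0 : (0 < `|z|)%N.
  by rewrite lt0n; apply: contraNneq h => ->; rewrite dvdn0.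
rewrite intrK; case: z h n0 => n /= h n0; rewrite ?vN vnat // logn_ndvd //.
Qed.

Lemma p_gt1 : (1 < p)%N. Proof. exact: prime_gt1. Qed.

Lemma not_both q : (p %| `|numq q|)%N -> (p %| `|denq q|)%N -> False.
Proof.
move=> h1 h2; have := coprime_num_den q; rewrite /coprime => /eqP cp.
have : (p %| gcdn `|numq q| `|denq q|)%N by rewrite dvdn_gcd h1 h2.
by rewrite cp dvdn1 => /eqP p1; move: p_gt1; rewrite p1.
Qed.

Lemma vrat q : q != 0 -> v (ratr q) = Some (vpQ p q). Proof. exact: (v_rat CM). Qed.

Lemma ZpI q : Zp_loc p q <-> Iv (ratr q).
Proof.
have [->|nz] := eqVneq q 0.
  rewrite r0 /Zp_loc; split=> _; first exact: Iv0.
  by rewrite /= dvdn1; case: eqP p_gt1 => // ->.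
rewrite /Iv /vge vrat // /vpQ /Zp_loc subr_ge0 ler_nat.
case: (boolP (p %| `|denq q|)%N) => hd /=; split=> // h.
have hn : ~~ (p %| `|numq q|)%N by apply/negP => hn; exact: not_both hn hd.
move: h; rewrite (logn_ndvd hn) leqn0 => /eqP h0.
have : (0 < logn p `|denq q|)%N by apply: logn_dvd => //; rewrite absz_gt0 denq_neq0.
by rewrite h0.
by rewrite (logn_ndvd hd).
Qed.

Lemma MvQ q : Zp_loc p q -> (Mv (ratr q) <-> (p %| `|numq q|)%N).
Proof.
have [->|nz] := eqVneq q 0; first by rewrite r0 /= dvdn0; split=> // _; exact: Mv0.
move=> hz; rewrite /Mv vrat // /vpQ (logn_ndvd hz) subr0 /= ltr0n.
split; last by apply: logn_dvd; rewrite absz_gt0 numq_eq0.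
by move=> h; apply: contraTT h => /logn_ndvd ->.
Qed.

Lemma Zp_divp q : Zp_loc p q -> Mv (ratr q) -> Zp_loc p (q / p%:R).
Proof.
move=> hz hm; apply/ZpI.
rewrite (rmorphM rK) (fmorphV rK) /= (rmorph_nat rK).
have [->|nz] := eqVneq q 0; first by rewrite (rmorph0 rK) mul0r; exact: Iv0.
move: hm; rewrite /Mv vrat //= => hr.
have h1 : 1 <= vpQ p q.
  by move: hr; rewrite /vpQ (logn_ndvd hz) subr0 ltr0n ler1n.
have := vgeM (N := 1) (N' := -1) _ (vSome_ge (vinv vp)).
rewrite subrr; apply; have E := vrat nz; by rewrite /vge /rK E.
Qed.


Definition res (c : 'F_p) : K := (c : nat)%:R.
Definition cg (c : 'F_p) (x : K) := Mv (x - res c).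

Lemma cgE c x y : cg c x -> cg c y -> Mv (x - y).
Proof. by move=> h1 h2; have := MvB h1 h2; rewrite opprB addrA subrK. Qed.

Lemma Mv_eq x y : Mv x -> x = y -> Mv y. Proof. by move=> h <-. Qed.

Lemma cg_res c : cg c (res c). Proof. by rewrite /cg subrr; exact: Mv0. Qed.

Lemma Iv_res c : Iv (res c). Proof. exact: Ivnat. Qed.

Lemma cgI c x : cg c x -> Iv x.
Proof. by move=> /MvI h; rewrite -(subrK (res c) x); apply: IvD h (Iv_res c). Qed.

Lemma res_nat n : cg n%:R n%:R.
Proof.
rewrite /cg /res (val_Fp_nat pP) {1}(divn_eq n p) natrD addrK natrM.
by apply: MvMr (Ivnat _) Mvp.
Qed.

Lemma cgD c c' x y : cg c x -> cg c' y -> cg (c + c') (x + y).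
Proof.
move=> h1 h2; have := res_nat (c + c')%N; rewrite natrD !natr_Zp => h3.
apply: Mv_eq (MvD (MvD h1 h2) (cgE h3 (cg_res _))) _; rewrite /res; ring.
Qed.

Lemma cgM c c' x y : cg c x -> cg c' y -> cg (c * c') (x * y).
Proof.
move=> h1 h2; have := res_nat (c * c')%N; rewrite natrM !natr_Zp => h3.
apply: Mv_eq (MvD (MvD (MvMl h1 (cgI h2)) (MvMr (Iv_res c) h2)) (cgE h3 (cg_res _))) _.
rewrite /res; ring.
Qed.

Lemma cg0 : cg 0 0. Proof. exact: cg_res. Qed.

Lemma cgN c x : cg c x -> cg (-c) (-x).
Proof.
move=> h; have h1 := cgD (cg_res (-c)) h; rewrite addNr in h1.
have := cgE h1 cg0; rewrite subr0 => h2.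
apply: Mv_eq (MvB cg0 h2) _; rewrite (_ : res 0 = 0) //; ring.
Qed.

Lemma cg_eq0 x : cg 0 x -> Mv x.
Proof. by rewrite /cg /res /= subr0. Qed.

Lemma cg_int (z : int) : cg z%:~R z%:~R.
Proof.
case: z => n; first exact: res_nat.
by rewrite NegzE !mulrNz; apply: cgN; exact: res_nat.
Qed.

Lemma cg_redp q : Zp_loc p q -> cg (redp p q) (ratr q).
Proof.
move=> hz; set c := redp p q.
have dF : ((denq q)%:~R : 'F_p) != 0.
  by rewrite -(dvdz_pcharf (pchar_Fp pP)).
have e : c * (denq q)%:~R = (numq q)%:~R by rewrite /c /redp divfK.
have h1 := cgM (cg_res c) (cg_int (denq q)); rewrite e in h1.
have h2 := cgE h1 (cg_int (numq q)).
have Id : Iv ((denq q)%:~R ^-1 : K).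
  by rewrite /Iv (vSome_ge (vinv (vint_unit hz))) ?oppr0.
rewrite /cg; have -> : ratr q - res c = - ((res c * (denq q)%:~R - (numq q)%:~R) * (denq q)%:~R^-1).
  by rewrite /ratr mulrBl mulfK ?nz_den // opprB.
by rewrite MvN; apply: MvMl.
Qed.

Lemma redp_nat n : redp p n%:R = n%:R.
Proof.
rewrite /redp; have -> : (n%:R : rat) = (n%:Z)%:~R by [].
by rewrite numq_int denq_int divr1.
Qed.


Definition IP (P : {poly K}) := forall i, Iv P`_i.
Definition MP (P : {poly K}) := forall i, Mv P`_i.
Definition PC (h : {poly 'F_p}) (P : {poly K}) := forall i, cg h`_i P`_i.
Definition liftp (h : {poly 'F_p}) : {poly K} := map_poly res h.

Lemma res0 : res 0 = 0. Proof. by []. Qed.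
Lemma coef_liftp h i : (liftp h)`_i = res h`_i.
Proof. by rewrite coef_map_id0. Qed.
Lemma coef_E (f : {poly rat}) i : (map_poly ratr f : {poly K})`_i = ratr f`_i.
Proof. by rewrite coef_map_id0 // r0. Qed.
Lemma EK (f : {poly rat}) : (map_poly ratr f : {poly K}) = map_poly rK f.
Proof. by []. Qed.

Lemma IP0 : IP 0. Proof. by move=> i; rewrite coef0; exact: Iv0. Qed.
Lemma MP0 : MP 0. Proof. by move=> i; rewrite coef0; exact: Mv0. Qed.
Lemma MPI P : MP P -> IP P. Proof. by move=> h i; apply: MvI. Qed.
Lemma IPD P Q : IP P -> IP Q -> IP (P + Q).
Proof. by move=> h1 h2 i; rewrite coefD; apply: IvD. Qed.
Lemma MPD P Q : MP P -> MP Q -> MP (P + Q).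
Proof. by move=> h1 h2 i; rewrite coefD; apply: MvD. Qed.
Lemma IPN P : IP P -> IP (- P).
Proof. by move=> h1 i; rewrite coefN IvN. Qed.
Lemma MPN P : MP P -> MP (- P).
Proof. by move=> h1 i; rewrite coefN MvN. Qed.
Lemma IPB P Q : IP P -> IP Q -> IP (P - Q).
Proof. by move=> h1 h2; apply: IPD => //; apply: IPN. Qed.
Lemma MPB P Q : MP P -> MP Q -> MP (P - Q).
Proof. by move=> h1 h2; apply: MPD => //; apply: MPN. Qed.
Lemma IPZ c P : Iv c -> IP P -> IP (c *: P).
Proof. by move=> h1 h2 i; rewrite coefZ; apply: IvM. Qed.
Lemma MPZ c P : Mv c -> IP P -> MP (c *: P).
Proof. by move=> h1 h2 i; rewrite coefZ; apply: MvMl. Qed.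
Lemma IPC c : Iv c -> IP c%:P.
Proof. by move=> h i; rewrite coefC; case: eqP => _ //; exact: Iv0. Qed.
Lemma IP1 : IP 1. Proof. exact: (IPC Iv1). Qed.
Lemma IPX : IP 'X.
Proof. by move=> i; rewrite coefX; case: eqP => _; [exact: Iv1 | exact: Iv0]. Qed.
Lemma IPM P Q : IP P -> IP Q -> IP (P * Q).
Proof.
move=> h1 h2 i; rewrite coefM; apply: Iv_sum => j _; exact: IvM.
Qed.
Lemma MPM P Q : MP P -> IP Q -> MP (P * Q).
Proof.
move=> h1 h2 i; rewrite coefM; apply: Mv_sum => j _; exact: MvMl.
Qed.
Lemma IPX_pow P n : IP P -> IP (P ^+ n).
Proof. by move=> h; elim: n => [|n IH]; [rewrite expr0; exact: IP1 | rewrite exprS; apply: IPM]. Qed.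
Lemma IP_sum (I : Type) (r : seq I) (Pr : pred I) (F : I -> {poly K}) :
  (forall i, Pr i -> IP (F i)) -> IP (\sum_(i <- r | Pr i) F i).
Proof. by move=> h; apply: (@big_ind _ IP) => //; [exact: IP0 | exact: IPD]. Qed.
Lemma MP_sum (I : Type) (r : seq I) (Pr : pred I) (F : I -> {poly K}) :
  (forall i, Pr i -> MP (F i)) -> MP (\sum_(i <- r | Pr i) F i).
Proof. by move=> h; apply: (@big_ind _ MP) => //; [exact: MP0 | exact: MPD]. Qed.

Lemma IP_horner P x : IP P -> Iv x -> Iv P.[x].
Proof. by move=> h hx; rewrite horner_coef; apply: Iv_sum => i _; apply: IvM (IvX _ hx). Qed.
Lemma MP_horner P x : MP P -> Iv x -> Mv P.[x].
Proof. by move=> h hx; rewrite horner_coef; apply: Mv_sum => i _; apply: MvMl (IvX _ hx). Qed.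

Lemma IP_comp P Q : IP P -> IP Q -> IP (P \Po Q).
Proof. by move=> h1 h2; rewrite comp_polyE; apply: IP_sum => i _; apply: IPZ (IPX_pow _ h2). Qed.
Lemma MP_comp P Q : MP P -> IP Q -> MP (P \Po Q).
Proof. by move=> h1 h2; rewrite comp_polyE; apply: MP_sum => i _; apply: MPZ (IPX_pow _ h2). Qed.

Lemma PCD h h' P P' : PC h P -> PC h' P' -> PC (h + h') (P + P').
Proof. by move=> h1 h2 i; rewrite !coefD; apply: cgD. Qed.
Lemma PCN h P : PC h P -> PC (- h) (- P).
Proof. by move=> h1 i; rewrite !coefN; apply: cgN. Qed.
Lemma PCB h h' P P' : PC h P -> PC h' P' -> PC (h - h') (P - P').
Proof. by move=> h1 h2; apply: PCD => //; apply: PCN. Qed.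
Lemma PCZ c x h P : cg c x -> PC h P -> PC (c *: h) (x *: P).
Proof. by move=> h1 h2 i; rewrite !coefZ; apply: cgM. Qed.
Lemma PCM h h' P P' : PC h P -> PC h' P' -> PC (h * h') (P * P').
Proof.
move=> h1 h2 i; rewrite !coefM.
apply: (big_rec2 cg) => [|j a b _ hab]; first exact: cg0.
by apply: cgD => //; apply: cgM.
Qed.
Lemma PC_liftp h : PC h (liftp h).
Proof. by move=> i; rewrite coef_liftp; exact: cg_res. Qed.
Lemma PC_IP h P : PC h P -> IP P.
Proof. by move=> h1 i; apply: cgI (h1 i). Qed.
Lemma PC_MP h P P' : PC h P -> PC h P' -> MP (P - P').
Proof. by move=> h1 h2 i; rewrite coefB; apply: cgE. Qed.
Lemma PC0 h P : PC h P -> h = 0 -> MP P.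
Proof. by move=> h1 e i; have := h1 i; rewrite e coef0; exact: cg_eq0. Qed.

Lemma Zp_loc0 : Zp_loc p 0.
Proof. by rewrite /Zp_loc /= dvdn1; case: eqP p_gt1 => // ->. Qed.

Lemma polyZpP f : polyZp p f <-> forall i, Zp_loc p f`_i.
Proof.
rewrite /polyZp; split.
  move/(all_nthP (0:rat)) => H i.
  have [Hi|Hi] := ltnP i (size f); first exact: H.
  by rewrite nth_default //; exact: Zp_loc0.
move=> H; apply/(all_nthP (0:rat)) => i _; exact: H.
Qed.

Lemma polyZpI f : polyZp p f <-> IP (map_poly ratr f).
Proof.
rewrite polyZpP; split=> h i; first by rewrite coef_E; apply/ZpI.
by apply/ZpI; rewrite -coef_E.
Qed.

Lemma redp0 : redp p 0 = 0. Proof. by rewrite /redp /= mul0r. Qed.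

Lemma PC_redp f : polyZp p f -> PC (map_poly (redp p) f) (map_poly ratr f).
Proof.
move/polyZpP=> h i; rewrite coef_E coef_map_id0 ?redp0 //; exact: cg_redp.
Qed.

Lemma root_resP (alpha : K) h P : Iv alpha -> PC h P ->
  (root_res v alpha h <-> Mv P.[alpha]).
Proof.
move=> ha hP.
have hM : Mv (P - liftp h).[alpha] by apply: MP_horner => //; apply: PC_MP hP (PC_liftp h).
have e : (map_poly (fun c : 'F_p => ((nat_of_ord c)%:R : K)) h) = liftp h by [].
rewrite /root_res e -/(Mv _); rewrite hornerD hornerN in hM; split=> h1.
  by apply: Mv_eq (MvD hM h1) _; ring.
by apply: Mv_eq (MvB h1 hM) _; ring.
Qed.


Definition ev (alpha : K) (f : {poly rat}) : K := (map_poly ratr f : {poly K}).[alpha].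

Lemma PC_g alpha g : g_spec p v alpha g -> PC (map_poly (redp p) g) (map_poly ratr g).
Proof. by case=> hg _; apply: PC_redp. Qed.

Lemma Mv_g alpha g : Iv alpha -> g_spec p v alpha g -> Mv (ev alpha g).
Proof.
move=> ha gs; have := gs; case=> _ [_ [_ [hr _]]].
by apply/(root_resP ha (PC_g gs)).
Qed.

Lemma ideal_bwd alpha g f : Iv alpha -> g_spec p v alpha g -> pg_ideal p g f ->
  polyZp p f /\ Mv (ev alpha f).
Proof.
move=> ha gs [h1 [h2 [z1 [z2 ->]]]].
have Ig : IP (map_poly ratr g) by apply/polyZpI; case: gs.
have I1 : IP (map_poly ratr h1) by apply/polyZpI.
have I2 : IP (map_poly ratr h2) by apply/polyZpI.
have E : map_poly ratr ((p%:R : rat) *: h1 + g * h2) =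
   (p%:R : K) *: map_poly ratr h1 + map_poly ratr g * map_poly ratr h2 :> {poly K}.
  by rewrite !EK rmorphD rmorphM /= map_polyZ (rmorph_nat rK).
rewrite /ev E; split.
  by apply/polyZpI; rewrite E; apply: IPD; [apply: IPZ (Ivnat _) I1 | apply: IPM].
rewrite hornerD hornerZ hornerM; apply: MvD.
  by apply: MvMl Mvp (IP_horner I1 ha).
by apply: MvMl (Mv_g ha gs) (IP_horner I2 ha).
Qed.

Definition liftQ (h : {poly 'F_p}) : {poly rat} := map_poly (fun c : 'F_p => ((c : nat)%:R : rat)) h.

Lemma PC_liftQ h : PC h (map_poly ratr (liftQ h)).
Proof.
move=> i; rewrite coef_E coef_map_id0 // ratr_nat; exact: cg_res.
Qed.

Lemma polyZp_liftQ h : polyZp p (liftQ h).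
Proof. by apply/polyZpI; apply: PC_IP (PC_liftQ h). Qed.

Lemma ideal_fwd alpha g f : Iv alpha -> g_spec p v alpha g ->
  polyZp p f -> Mv (ev alpha f) -> pg_ideal p g f.
Proof.
move=> ha gs zf mf.
have := gs; case=> zg [mong [_ [_ gmin]]].
set gb := map_poly (redp p) g in gmin *.
set fb := map_poly (redp p) f.
have gb0 : gb != 0.
  have := gs; case=> _ [_ [mgb _]]; exact: monic_neq0 mgb.
set q := fb %/ gb; set r := fb %% gb.
have Pf := PC_redp zf; have Pg := PC_g gs.
have Pr : PC r (map_poly ratr f - map_poly ratr (liftQ q) * map_poly ratr g).
  have -> : r = fb - q * gb by rewrite /r /q {2}(divp_eq fb gb) addrC addKr.
  by apply: PCB => //; apply: PCM => //; apply: PC_liftQ.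
have rr : root_res v alpha r.
  apply/(root_resP ha Pr); rewrite hornerD hornerN hornerM; apply: MvB => //.
  apply: MvMr; first by apply: IP_horner (PC_IP (PC_liftQ _)) ha.
  exact: (Mv_g ha gs).
have r0 : r = 0.
  have [//|rn0] := eqVneq r 0; exfalso.
  have := gmin _ rn0 rr; rewrite leqNgt; move/negP; apply.
  by rewrite ltn_modp.
set h2 := liftQ q.
set D := f - g * h2.
have zD : polyZp p D.
  apply/polyZpI; rewrite /D EK rmorphB rmorphM /= -!EK.
  apply: IPB; first by apply/polyZpI.
  by apply: IPM; apply/polyZpI => //; exact: polyZp_liftQ.
have MD : MP (map_poly ratr D).
  apply: (@PC0 (fb - gb * q)).
    rewrite /D EK rmorphB rmorphM /= -!EK; apply: PCB => //; apply: PCM => //.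
    exact: PC_liftQ.
  by rewrite {1}(divp_eq fb gb) -/q -/r r0 addr0 mulrC subrr.
exists (p%:R^-1 *: D), h2; split; last split.
- apply/polyZpP => i; rewrite coefZ mulrC; apply: Zp_divp.
    by move/polyZpP: zD.
  by have := MD i; rewrite coef_E.
- exact: polyZp_liftQ.
- have pn0 : (p%:R : rat) != 0 by rewrite pnatr_eq0 -lt0n prime_gt0.
  by rewrite scalerA mulfV // scale1r /D subrK.
Qed.


Lemma opos_omin x y : opos (omin x y) = opos x && opos y.
Proof. by case: x => [a|]; case: y => [b|] //=; rewrite ?andbT // lt_min. Qed.

Lemma foldr_opos (a : nat -> option rat) s :
  opos (foldr (fun i acc => omin (a i) acc) None s) = all (fun i => opos (a i)) s.
Proof. by elim: s => [|j s IH] //=; rewrite opos_omin IH. Qed.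

Definition shF alpha f : {poly K} := (map_poly ratr f : {poly K}) \Po ('X + alpha%:P).

Lemma monoval_Some alpha d f :
  opos (monoval v alpha (Some d) f) <->
  forall i, (i < size (shF alpha f))%N ->
    opos (match v (shF alpha f)`_i with None => None | Some r => Some (r + i%:R * d) end).
Proof.
rewrite /monoval -/(shF alpha f) foldr_opos; split.
  by move/allP=> h i hi; apply: h; rewrite mem_iota.
by move=> h; apply/allP => i; rewrite mem_iota => /andP [_ hi]; apply: h.
Qed.

Lemma shF0 alpha f : (shF alpha f)`_0 = ev alpha f.
Proof. by rewrite -horner_coef0 /shF horner_comp !hornerE. Qed.

Lemma IP_shF alpha f : Iv alpha -> polyZp p f -> IP (shF alpha f).
Proof.
move=> ha /polyZpI hf; apply: IP_comp => //; apply: IPD; [exact: IPX | exact: IPC].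
Qed.

Lemma mono_pos alpha delta f : Iv alpha -> polyZp p f ->
  (forall d, delta = Some d -> 0 < d) ->
  (opos (monoval v alpha delta f) <-> Mv (ev alpha f)).
Proof.
move=> ha zf hd; case: delta hd => [d|] hd; last by [].
have d0 := hd d erefl.
have IF := IP_shF ha zf.
rewrite monoval_Some; split=> h.
  case: (posnP (size (shF alpha f))) => hs.
    by rewrite -shF0 nth_default ?hs //; exact: Mv0.
  by have := h 0%N hs; rewrite shF0 mulr0n mul0r /Mv; case: (v _) => //= r; rewrite addr0.
move=> i _; case: i => [|i].
  by move: h; rewrite -shF0 /Mv; case: (v _) => //= r; rewrite mul0r addr0.
have := IF i.+1; rewrite /Iv /vge; case: (v _) => //= r hr.
by apply: ltr_wpDl hr _; apply: mulr_gt0 => //; rewrite ltr0n.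
Qed.

Lemma mono_zero alpha f :
  opos (monoval v alpha (Some 0) f) <-> MP (shF alpha f).
Proof.
rewrite monoval_Some; split=> h i.
  case: (ltnP i (size (shF alpha f))) => hi.
    by have := h i hi; rewrite /Mv; case: (v _) => //= r; rewrite mulr0 addr0.
  by rewrite nth_default //; exact: Mv0.
by move=> _; have := h i; rewrite /Mv; case: (v _) => //= r; rewrite mulr0 addr0.
Qed.


Lemma EZ (c : rat) (h : {poly rat}) :
  map_poly ratr (c *: h) = ratr c *: map_poly ratr h :> {poly K}.
Proof. by rewrite !EK map_polyZ. Qed.

Lemma zero_case alpha f : Iv alpha ->
  (polyZp p f /\ MP (shF alpha f)) <-> p_ideal p f.
Proof.
move=> ha; have pn0 : (p%:R : rat) != 0 by rewrite pnatr_eq0 -lt0n prime_gt0.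
have IQ : IP ('X + alpha%:P) by apply: IPD; [exact: IPX | exact: IPC].
split.
  case=> zf mF.
  have mf : MP (map_poly ratr f).
    have <- : shF alpha f \Po ('X - alpha%:P) = map_poly ratr f.
      rewrite /shF -comp_polyA comp_polyD comp_polyX comp_polyC subrK.
      exact: comp_polyXr.
    apply: MP_comp mF _; apply: IPB; [exact: IPX | exact: IPC].
  exists (p%:R^-1 *: f); split; last by rewrite scalerA mulfV // scale1r.
  apply/polyZpP => i; rewrite coefZ mulrC; apply: Zp_divp.
    by move/polyZpP: zf.
  by have := mf i; rewrite coef_E.
case=> h [zh ->].
have Ih : IP (map_poly ratr h) by apply/polyZpI.
split.
  by apply/polyZpI; rewrite EZ; apply: IPZ Ih; rewrite ratr_nat; exact: Ivnat.
rewrite /shF EZ comp_polyZ ratr_nat; apply: MPZ Mvp _; exact: IP_comp.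
Qed.


Local Notation RR := (@root_res p K v).

Lemma redp_liftQ h : map_poly (redp p) (liftQ h) = h.
Proof.
rewrite /liftQ -map_poly_comp_id0 ?redp0 //.
rewrite (eq_map_poly (g := id)) ?map_poly_id // => c /=.
by rewrite redp_nat natr_Zp.
Qed.

Lemma val1F : nat_of_ord (1 : 'F_p) = 1%N.
Proof. by move: (val_Fp_nat pP 1); rewrite mulr1n modn_small // p_gt1. Qed.

Lemma liftQ_monic h : h \is monic -> liftQ h \is monic.
Proof.
move=> /monicP mh; apply/monicP; rewrite /liftQ lead_coef_map_id0 ?mh ?val1F //.
Qed.

Lemma min_exists alpha (h0 : {poly 'F_p}) : h0 != 0 -> RR alpha h0 ->
  exists h : {poly 'F_p}, [/\ h != 0, RR alpha h &
    forall h', h' != 0 -> RR alpha h' -> (size h <= size h')%N].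
Proof.
suff : forall n (h : {poly 'F_p}), (size h <= n)%N -> h != 0 -> RR alpha h ->
  exists h : {poly 'F_p}, [/\ h != 0, RR alpha h &
    forall h', h' != 0 -> RR alpha h' -> (size h <= size h')%N].
  by move=> H; apply: H.
elim=> [|n IH] h hs hnz hr.
  by move: hs; rewrite leqn0 size_poly_eq0 (negbTE hnz).
case: (classic (exists h', [/\ h' != 0, RR alpha h' & (size h' < size h)%N])).
  case=> h' [h1 h2 h3]; apply: (IH h') => //.
  by rewrite -ltnS; exact: leq_trans h3 hs.
move=> nex; exists h; split=> // h' h1 h2; rewrite leqNgt; apply/negP => h3.
by apply: nex; exists h'.
Qed.

Lemma g_exists alpha : Iv alpha ->
  (exists h0 : {poly 'F_p}, h0 != 0 /\ RR alpha h0) ->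
  exists g, g_spec p v alpha g.
Proof.
move=> ha [h0 [nz0 r0]].
have [h [hnz hr hmin]] := min_exists nz0 r0.
set c := lead_coef h.
have cn0 : c != 0 by rewrite lead_coef_eq0.
have ci0 : c^-1 != 0 by rewrite invr_eq0.
set h' := c^-1 *: h.
have mh' : h' \is monic by apply/monicP; rewrite lead_coefZ mulVf.
have hs : size h' = size h by rewrite size_scale.
have rh' : RR alpha h'.
  apply/(root_resP ha (PCZ (cg_res c^-1) (PC_liftp h))).
  rewrite hornerZ; apply: MvMr (Iv_res _) _.
  exact/(root_resP ha (PC_liftp h)).
exists (liftQ h'); split; first exact: polyZp_liftQ.
split; first exact: liftQ_monic.
rewrite redp_liftQ; split=> //; split=> // h'' h1 h2.
by rewrite hs; apply: hmin.
Qed.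


Lemma argmin_exists (n : nat) (Pr : nat -> bool) (F : nat -> rat) :
  (exists i, (i < n)%N && Pr i) ->
  exists j, [/\ (j < n)%N, Pr j & forall i, (i < n)%N -> Pr i -> F j <= F i].
Proof.
elim: n => [|n IH]; first by case.
case=> i /andP [hi Pi].
case: (boolP [exists i : 'I_n, Pr i]) => [/existsP [i0 hi0]|nex].
  have ex0 : exists i, (i < n)%N && Pr i by exists i0; rewrite ltn_ord.
  have [j [hj Pj Fj]] := IH ex0.
  case: (boolP (Pr n && (F n < F j))) => [/andP [Pn lt]|nlt].
    exists n; split=> // k; rewrite ltnS leq_eqVlt => /orP [/eqP->|lkn] Pk; first exact: lexx.
    by apply: le_trans (ltW lt) (Fj k lkn Pk).
  exists j; split=> //; first by rewrite ltnS ltnW.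
  move=> k; rewrite ltnS leq_eqVlt => /orP [/eqP ekn|lkn] Pk; last exact: Fj.
  by move: nlt; rewrite -ekn Pk /= -leNgt.
have Pn : Pr n.
  move: hi; rewrite ltnS leq_eqVlt => /orP [/eqP <-|lin] //.
  by move: nex => /existsPn /(_ (Ordinal lin)); rewrite Pi.
exists n; split=> // k; rewrite ltnS leq_eqVlt => /orP [/eqP->|lkn] Pk; first exact: lexx.
by move: nex => /existsPn /(_ (Ordinal lkn)); rewrite Pk.
Qed.


Lemma v_close c x m : v c = Some m -> vge v (c - x) (m + 1) -> v x = Some m.
Proof.
move=> Ec hcx.
have Hc : vge v c m by exact: vSome_ge.
have xn0 : x != 0.
  apply/eqP => x0; move: hcx; rewrite x0 subr0 /vge Ec.
  by rewrite gerDl ler10.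
have [t Et] := vSome xn0.
have hx : vge v x m.
  have h1 : m <= m + 1 by rewrite lerDl ler01.
  have := vgeB Hc (vge_le hcx h1); have -> : c - (c - x) = x by ring.
  by [].
move: hx; rewrite /vge Et => hmt.
case: (ltrP m t) => hlt; last by congr Some; apply/eqP; rewrite eq_le hlt hmt.
have : vge v c (Num.min t (m + 1)).
  have -> : c = (c - x) + x by rewrite subrK.
  apply: vgeD; apply: vge_le; [exact: hcx| |exact: vSome_ge Et|];
  by rewrite ge_min lexx ?orbT.
rewrite /vge Ec ge_min => /orP [h1|h1].
  by move: h1; rewrite leNgt hlt.
by move: h1; rewrite gerDl ler10.
Qed.

Lemma Mv_powB a b n : Iv a -> Iv b -> Mv (a - b) -> Mv (a ^+ n - b ^+ n).
Proof.
move=> ha hb hab; elim: n => [|n IH]; first by rewrite !expr0 subrr; exact: Mv0.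
have -> : a ^+ n.+1 - b ^+ n.+1 = a * (a ^+ n - b ^+ n) + (a - b) * b ^+ n.
  by rewrite !exprS; ring.
by apply: MvD; [apply: MvMr | apply: MvMl (IvX _ hb)].
Qed.

Lemma Mv_hornerB P a b : IP P -> Iv a -> Iv b -> Mv (a - b) -> Mv (P.[a] - P.[b]).
Proof.
move=> hP ha hb hab; rewrite !horner_coef -sumrB; apply: Mv_sum => i _.
by rewrite -mulrBr; apply: MvMr (hP i) (Mv_powB _ ha hb hab).
Qed.


Lemma ratrM x y : ratr (x * y) = ratr x * ratr y :> K. Proof. exact: (rmorphM rK). Qed.
Lemma ratrV x : ratr (x^-1) = (ratr x)^-1 :> K. Proof. exact: (fmorphV rK). Qed.

Lemma res_root_exists alpha : Iv alpha ->
  exists h0 : {poly 'F_p}, h0 != 0 /\ RR alpha h0.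
Proof.
move=> ha.
have [y [[P [Pn0 [PQ Py]]] hay]] := v_dense CM alpha 1.
have May : Mv (alpha - y) by apply/MvP; exists 1; split.
have Iy : Iv y.
  have -> : y = alpha - (alpha - y) by ring.
  by apply: IvB ha (MvI May).
pose val0 (x : K) := odflt 0 (v x).
have ex : exists i, (i < size P)%N && (P`_i != 0).
  exists (size P).-1; rewrite prednK ?size_poly_gt0 // leqnn /=.
  by rewrite -lead_coefE lead_coef_eq0.
have [j [hj Pj minj]] := argmin_exists (fun i => val0 P`_i) ex.
have [m Em] := vSome Pj.
have vgm : forall i, vge v P`_i m.
  move=> i; have [->|nz] := eqVneq P`_i 0; first exact: vge0.
  case: (ltnP i (size P)) => hi; last by rewrite nth_default // eqxx in nz.
  have := minj i hi nz; rewrite /val0 Em /=; have [r Er] := vSome nz.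
  by rewrite /vge Er /=.
have [q0 hr0] := PQ j (m + 1).
have Er0 : v (ratr q0) = Some m := v_close Em hr0.
set ri := (ratr q0 : K)^-1.
have Eri : v ri = Some (- m) := vinv Er0.
have hs : forall i, exists q : rat, vge v (P`_i - ratr q) (m + 1) := fun i => PQ i (m + 1).
pose s i := xchoose (hs i).
have hsP : forall i, vge v (P`_i - ratr (s i)) (m + 1) := fun i => xchooseP (hs i).
pose Q := \poly_(i < size P) (s i / q0).
set P' := ri *: P.
have IP' : IP P'.
  move=> i; rewrite coefZ; have := vgeM (vSome_ge Eri) (vgm i).
  by rewrite addNr.
have MQ : MP (P' - map_poly ratr Q).
  move=> i; rewrite coefB coefZ coef_E coef_poly.
  case: (ltnP i (size P)) => hi /=.
    rewrite ratrM ratrV -/ri; apply/MvP; exists 1; split=> //.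
    have := vgeM (hsP i) (vSome_ge Eri).
    have -> : m + 1 + - m = 1 by ring.
    by have -> : ri * P`_i - ratr (s i) * ri = (P`_i - ratr (s i)) * ri by ring.
  by rewrite nth_default // r0 mulr0 subrr; exact: Mv0.
have IQ : polyZp p Q.
  apply/polyZpI; have -> : map_poly ratr Q = P' - (P' - map_poly ratr Q) by ring.
  by apply: IPB IP' (MPI MQ).
set h := map_poly (redp p) Q.
have PCh : PC h (map_poly ratr Q) := PC_redp IQ.
exists h; split.
  apply/eqP => h0; have := PCh j; rewrite h0 coef0 => /cg_eq0 Mq.
  have := MvD Mq (MQ j); rewrite coefB addrC subrK coefZ.
  by rewrite /Mv (v_mul CM Eri Em) addNr.
apply/(root_resP ha PCh).
have Py0 : P'.[y] = 0 by rewrite hornerZ (eqP Py) mulr0.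
have -> : (map_poly ratr Q).[alpha] =
   (P'.[alpha] - P'.[y]) - (P' - map_poly ratr Q).[alpha].
  by rewrite Py0 subr0 hornerD hornerN; ring.
apply: MvB; first exact: Mv_hornerB.
exact: MP_horner.
Qed.

End Pf.

Set Strict Implicit. Unset Implicit Arguments.

Theorem mainTheorem14 (p : nat) (K : closedFieldType) (v : K -> option rat)
    (alpha : K) (delta : option rat) :
  prime p -> Cp_model p v ->
  vge v alpha 0 ->
  (forall d, delta = Some d -> 0 <= d) ->
  admissible v alpha delta ->
  (delta = Some 0 ->
     forall f : {poly rat},
       (polyZp p f /\ opos (monoval v alpha delta f)) <-> p_ideal p f) /\
  (delta <> Some 0 ->
     (exists g, g_spec p v alpha g) /\
     forall g, g_spec p v alpha g ->
     forall f : {poly rat},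
       (polyZp p f /\ opos (monoval v alpha delta f)) <-> pg_ideal p g f).
Proof.
move=> pP CM ha hd _; split.
  move=> -> f; rewrite -(zero_case pP CM f ha); split.
    by case=> zf /(mono_zero CM) hm.
  by case=> zf hm; split=> //; apply/(mono_zero CM).
move=> hne.
have hd' : forall d, delta = Some d -> 0 < d.
  move=> d ed; rewrite lt_def (hd d ed) andbT; apply/eqP => d0.
  by apply: hne; rewrite ed d0.
split; first exact: (g_exists pP CM ha (res_root_exists pP CM ha)).
move=> g gs f; split.
  case=> zf hm; apply: (ideal_fwd pP CM ha gs zf).
  by apply/(mono_pos pP CM ha zf hd').
move=> hI; have [zf mf] := ideal_bwd pP CM ha gs hI; split=> //.
by apply/(mono_pos pP CM ha zf hd').
Qed.
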